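(* Let $n\in\mathbb{N}$, $a<b$, let $Z=\{z_i:i\in\mathbb{Z}\}$ be $n$-close on $(a,b)$, and let $F:[a,b]\to\mathbb{R}$ be zig-zag of order $n$ with respect to $Z$ on $[a,b]$. Then $$|F(z_i)-F(z_{i+1})|\ge 2^n|z_i-z_{i+1}|\quad\text{for all } i.$$ Furthermore, let $\mathcal{F}=\{[z_i,z_{i+1}]:i\in\mathbb{Z}\}$, and let $U=\bigsqcup_{i\in J}(a_i,b_i)\subset(a,b)$ be an open set (written as the disjoint union of its components) which is trim on $\mathcal{F}$. Let $G:[a,b]\to\mathbb{R}$ satisfy $G(a)=G(b)=F(a)$ and $G|_{[z_i,z_{i+1}]}=g(F,[z_i,z_{i+1}],U)$ for all $i\in\mathbb{Z}$. Define $H(x)=G(x)+\sum_{i\in J}\Phi_{n,[a_i,b_i]}(x)$ for $x\in[a,b]$. Then $$H(x)\le G(a)+2\,\Phi_{n,[a,b]}(x)\quad\text{for all } x\in[a,b].$$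
   Context: $|\cdot|$ denotes Lebesgue measure. For a closed interval $I=[a,b]$ and $n\in\mathbb{N}$, $\Phi_{n,I}(x)=2^{-n}\min\{x-a,b-x\}$ if $x\in[a,b]$ and $\Phi_{n,I}(x)=0$ otherwise. A set $Z=\{z_j:j\in\mathbb{Z}\}$ is $n$-close on $(a,b)$ if $a<z_j<z_{j+1}<b$ for all $j\in\mathbb{Z}$, $z_j\to b$ as $j\to\infty$, $z_j\to a$ as $j\to-\infty$, and $z_{j+1}-z_j<4^{-n}\min\{z_j-a,\,b-z_{j+1}\}$ for all $j\in\mathbb{Z}$. If $Z$ is $n$-close on $(a,b)$, a function $F:[a,b]\to\mathbb{R}$ is zig-zag of order $n$ with respect to $Z$ on $[a,b]$ if $F(a)=F(b)$, $F(z_j)=F(a)$ for even $j$, $F(z_j)=F(a)+\Phi_{n,[a,b]}(z_j)$ for odd $j$, and $F$ is linear (affine) on $[z_j,z_{j+1}]$ for every $j\in\mathbb{Z}$. An open set $U$ is trim in a closed interval $[c,d]$ if $|U\cap[c,d]|<d-c$ and $c,d\notin U$; $U$ is trim on a collection $\mathcal{F}$ of pairwise non-overlapping closed intervals if it is trim in each interval of $\mathcal{F}$. For $f$ linear on $[c,d]$ and $U$ trim in $[c,d]$, $g(f,[c,d],U)$ is the function on $[c,d]$ given by $g(x)=f(c)+\frac{|([c,d]\setminus U)\cap[c,x]|}{|[c,d]\setminus U|}(f(d)-f(c))$. *)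

(* Defs.v *)
From HB Require Import structures.
From mathcomp Require Import all_boot all_order all_algebra.
From mathcomp Require Import all_classical all_reals all_analysis.
Set Implicit Arguments. Unset Strict Implicit. Unset Printing Implicit Defensive.
Import Order.TTheory GRing.Theory Num.Theory.
Import numFieldNormedType.Exports.
Local Open Scope classical_set_scope.
Local Open Scope ring_scope.

Definition Phi {R : realType} (n : nat) (a b x : R) : R :=
  if (a <= x) && (x <= b) then (2 ^+ n)^-1 * Num.min (x - a) (b - x) else 0.

Definition n_close {R : realType} (n : nat) (a b : R) (z : int -> R) : Prop :=
  (forall j : int, a < z j /\ z j < z (j + 1) /\ z (j + 1) < b) /\
  ((fun k : nat => z (k%:Z)) @ \oo --> b) /\
  ((fun k : nat => z (- k%:Z)) @ \oo --> a) /\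
  (forall j : int, z (j + 1) - z j < (4 ^+ n)^-1 * Num.min (z j - a) (b - z (j + 1))).

Definition affine_on {R : realType} (f : R -> R) (c d : R) : Prop :=
  exists alpha beta : R, forall x, c <= x <= d -> f x = alpha * x + beta.

(* F is zig-zag of order n w.r.t. Z on [a,b] (Z assumed n-close separately) *)
Definition zigzag {R : realType} (n : nat) (a b : R) (z : int -> R) (F : R -> R) : Prop :=
  F a = F b /\
  (forall j : int, (2 %| j)%Z -> F (z j) = F a) /\
  (forall j : int, ~~ (2 %| j)%Z -> F (z j) = F a + Phi n a b (z j)) /\
  (forall j : int, affine_on F (z j) (z (j + 1))).

Definition trim_in {R : realType} (U : set R) (c d : R) : Prop :=
  open U /\ (lebesgue_measure (U `&` `[c, d]) < (d - c)%:E)%E /\ ~ U c /\ ~ U d.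

Definition gfun {R : realType} (f : R -> R) (c d : R) (U : set R) (x : R) : R :=
  f c + fine (lebesgue_measure ((`[c, d] `\` U) `&` `[c, x]))
        / fine (lebesgue_measure (`[c, d] `\` U)) * (f d - f c).

(* Main.v *)
Require Import Defs.
From HB Require Import structures.
From mathcomp Require Import all_boot all_order all_algebra.
From mathcomp Require Import all_classical all_reals all_analysis.
From mathcomp Require Import measurable_realfun.
From mathcomp Require Import lra zify.
Set Implicit Arguments. Unset Strict Implicit. Unset Printing Implicit Defensive.
Import Order.TTheory GRing.Theory Num.Theory.
Import numFieldNormedType.Exports.
Local Open Scope classical_set_scope.
Local Open Scope ring_scope.
Lemma ratio_bounds (R : realType) (U : set R) (c d x : R) :
  c < d -> trim_in U c d -> c <= x <= d ->
  0 <= fine (lebesgue_measure ((`[c, d] `\` U) `&` `[c, x]))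
  /\ fine (lebesgue_measure ((`[c, d] `\` U) `&` `[c, x]))
     <= fine (lebesgue_measure (`[c, d] `\` U))
  /\ 0 < fine (lebesgue_measure (`[c, d] `\` U)).
Proof.
move=> cd [oU [mU [_ _]]] _.
have mI : measurable (`[c, d] : set R) by exact: measurable_itv.
have mUm : measurable U by exact: open_measurable.
have mA : measurable (`[c, d] `\` U) by exact: measurableD.
have mB : measurable ((`[c, d] `\` U) `&` `[c, x]) by apply: measurableI => //; exact: measurable_itv.
have hI : lebesgue_measure `[c, d]%classic = (d - c)%:E.
  by rewrite lebesgue_measure_itv /= lte_fin cd -EFinB.
have hD : lebesgue_measure (`[c, d] `\` U) = ((d - c)%:E - lebesgue_measure (U `&` `[c, d]))%E.
  rewrite measureD //=; last by rewrite hI ltry.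
  by rewrite hI setIC.
have u0 : (0 <= lebesgue_measure (U `&` `[c, d]))%E by exact: measure_ge0.
have uf : lebesgue_measure (U `&` `[c, d]) \is a fin_num.
  by rewrite ge0_fin_numE // (lt_trans mU) // ltry.
have A0 : (0 <= lebesgue_measure (`[c, d] `\` U))%E by exact: measure_ge0.
have Af : lebesgue_measure (`[c, d] `\` U) \is a fin_num by rewrite hD fin_numB uf.
have BA : (lebesgue_measure ((`[c, d] `\` U) `&` `[c, x]) <= lebesgue_measure (`[c, d] `\` U))%E.
  by apply: le_measure => //; rewrite inE.
have B0 : (0 <= lebesgue_measure ((`[c, d] `\` U) `&` `[c, x]))%E by exact: measure_ge0.
have Bf : lebesgue_measure ((`[c, d] `\` U) `&` `[c, x]) \is a fin_num.
  by rewrite ge0_fin_numE // (le_lt_trans BA) // -ge0_fin_numE.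
split; first exact: fine_ge0.
split; first exact: fine_le.
rewrite hD -(fineK uf) -EFinB /= subr_gt0 -lte_fin fineK //.
Qed.
Lemma minC2 (R : realDomainType) (y w : R) :
  (Num.min y w = y /\ y <= w) \/ (Num.min y w = w /\ w <= y).
Proof.
by case: (leP y w) => h; [left|right]; split => //; exact: ltW.
Qed.

Lemma arith (R : realFieldType) (a b c d x e o : R) :
  d - c < c - a -> d - c < b - d -> c <= x -> x <= d -> (o = c \/ o = d) ->
  0 <= e -> e <= x - c -> e <= d - x ->
  Num.min (o - a) (b - o) + e <= 2 * Num.min (x - a) (b - x).
Proof.
move=> h1 h2 h3 h4 ho h5 h6 h7.
case: (minC2 (o - a) (b - o)) => [[-> h8]|[-> h8]];
case: (minC2 (x - a) (b - x)) => [[-> h9]|[-> h9]]; case: ho => ho; subst o; lra.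
Qed.
Lemma par (j : int) : (2 %| j + 1)%Z = ~~ (2 %| j)%Z.
Proof.
have [q [r [-> [r0 r2]]]] : exists q r : int, j = q * 2 + r /\ 0 <= r /\ r < 2.
  by exists (j %/ 2)%Z, (j %% 2)%Z; rewrite -divz_eq modz_ge0 // ltz_pmod.
have [hr|hr] : r = 0 \/ r = 1 by lia.
  rewrite hr addr0; apply/idP/idP.
    by case/dvdzP => q' /eqP; lia.
  by move=> /negP; case; apply/dvdzP; exists q.
rewrite hr; apply/idP/idP.
  move=> _; apply/negP; case/dvdzP => q' /eqP; lia.
move=> _; apply/dvdzP; exists (q + 1); lia.
Qed.
Lemma find_j (R : realType) (a b x : R) (z : int -> R) :
  (forall j : int, z j < z (j + 1)) ->
  ((fun k : nat => z (k%:Z)) @ \oo --> b) ->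
  ((fun k : nat => z (- k%:Z)) @ \oo --> a) ->
  a < x -> x < b -> exists j : int, z j <= x <= z (j + 1).
Proof.
move=> zinc hb ha ax xb.
move: (hb) => /cvgr_gt /(_ x xb) [N1 _ HN1].
move: (ha) => /cvgr_lt /(_ x ax) [N2 _ HN2].
have h1 : x < z N1 by apply: (HN1 N1); rewrite /= leqnn.
have h2 : z (- N2%:Z) < x by apply: (HN2 N2); rewrite /= leqnn.
pose P := fun m : nat => x < z (- N2%:Z + m%:Z).
have exP : exists m, P m.
  exists (N2 + N1)%N; rewrite /P.
  by rewrite (_ : _ + _ = N1%:Z) // PoszD addrA addNr add0r.
case: (ex_minnP exP) => m Pm Hmin.
case: m Pm Hmin => [|m] Pm Hmin.
  by move: Pm; rewrite /P addr0 => /(lt_trans h2); rewrite ltxx.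
exists (- N2%:Z + m%:Z); apply/andP; split; last first.
  by move: Pm; rewrite /P -addn1 PoszD addrA => /ltW.
rewrite leNgt; apply/negP => hm.
by have := Hmin m hm; rewrite ltnn.
Qed.
Lemma Phi_in (R : realType) n (a b x : R) : a <= x -> x <= b ->
  Phi n a b x = (2 ^+ n)^-1 * Num.min (x - a) (b - x).
Proof. by move=> h1 h2; rewrite /Phi h1 h2. Qed.

Lemma Phi_out (R : realType) n (a b x : R) : ~ (a < x < b) -> Phi n a b x = 0.
Proof.
move=> h; rewrite /Phi; case: ifP => // /andP[h1 h2].
have [->|h3] : x = a \/ a < x.
  by case: (leP x a) => h4; [left; apply/eqP; rewrite eq_le h4 h1| right].
  rewrite subrr (_ : Num.min 0 (b - a) = 0) ?mulr0 //.
  by case: (minC2 0 (b - a)) => [[-> _]|[-> ?]]; lra.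
have [->|h4] : x = b \/ x < b.
  by case: (leP b x) => h4; [left; apply/eqP; rewrite eq_le h4 h2| right].
  rewrite subrr (_ : Num.min (b - a) 0 = 0) ?mulr0 //.
  by case: (minC2 (b - a) 0) => [[-> ?]|[-> ?]]; lra.
by exfalso; apply: h; rewrite h3 h4.
Qed.

Lemma Phi_ge0 (R : realType) n (a b x : R) : 0 <= Phi n a b x.
Proof.
rewrite /Phi; case: ifP => // /andP[h1 h2].
apply: mulr_ge0; first by rewrite invr_ge0 exprn_ge0.
by case: (minC2 (x - a) (b - x)) => [[-> ?]|[-> ?]]; lra.
Qed.

Lemma part1_arith (R : realType) (K d m p : R) : 0 < K ->
  d < (K * K)^-1 * m -> m <= p -> K * d <= K^-1 * p.
Proof.
move=> K0 h1 h2.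
have t0 : 0 < K^-1 by rewrite invr_gt0.
apply: (@le_trans _ _ (K^-1 * m)); last by rewrite ler_pM2l.
rewrite invfM in h1.
have : K * d <= K * (K^-1 * K^-1 * m) by rewrite ler_pM2l // ltW.
by rewrite mulrA mulrA mulfV ?gt_eqF // mul1r.
Qed.
Unset Implicit Arguments.
Theorem mainTheorem5 (R : realType) (n : nat) (a b : R) (z : int -> R) (F : R -> R) :
  a < b -> n_close n a b z -> zigzag n a b z F ->
  (forall i : int, 2 ^+ n * `|z i - z (i + 1)| <= `|F (z i) - F (z (i + 1))|) /\
  (forall (J : choiceType) (a_ b_ : J -> R) (U : set R) (G : R -> R),
     (forall i, a_ i < b_ i) ->
     (forall i k, i <> k -> `]a_ i, b_ i[%classic `&` `]a_ k, b_ k[%classic = set0) ->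
     U = \bigcup_(i in [set: J]) `]a_ i, b_ i[%classic ->
     U `<=` `]a, b[%classic ->
     (forall j : int, trim_in U (z j) (z (j + 1))) ->
     G a = F a -> G b = F a ->
     (forall (j : int) (x : R), z j <= x <= z (j + 1) ->
        G x = gfun F (z j) (z (j + 1)) U x) ->
     forall x : R, a <= x <= b ->
       ((G x)%:E + \esum_(i in [set: J]) (Phi n (a_ i) (b_ i) x)%:E
          <= (G a + 2 * Phi n a b x)%:E)%E).
Proof.
move=> ab [hz [hb [ha hcl]]] [Fab [Fev [Fodd Faff]]].
set K : R := 2 ^+ n.
have K0 : 0 < K by rewrite exprn_gt0.
have K4 : (4 : R) ^+ n = K * K.
  by rewrite /K -exprMn; congr (_ ^+ _); lra.
have zinc : forall j, z j < z (j + 1) by move=> j; case: (hz j) => _ [].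
have za : forall j, a < z j by move=> j; case: (hz j).
have zb : forall j, z j < b.
  by move=> j; have [_ [_ h2]] := hz (j - 1); rewrite subrK in h2.
have Fo : forall j, ~~ (2 %| j)%Z ->
    F (z j) = F a + K^-1 * Num.min (z j - a) (b - z j).
  by move=> j hj; rewrite Fodd // Phi_in // ltW.
have q4 : forall j, z (j + 1) - z j < Num.min (z j - a) (b - z (j + 1)).
  move=> j; apply: (lt_le_trans (hcl j)); apply: ler_piMl.
    by case: (minC2 (z j - a) (b - z (j + 1))) => [[-> ?]|[-> ?]];
      have := za j; have := zb (j + 1); lra.
  by rewrite invf_le1 ?exprn_gt0 // exprn_ege1 //; lra.
split.
  move=> i.
  have hd : `|z i - z (i + 1)| = z (i + 1) - z i.
    by rewrite ltr0_norm ?opprB //; have := zinc i; lra.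
  have hm := hcl i; rewrite K4 in hm.
  have := za i; have := zb (i + 1); have := zinc i => h1 h2 h3.
  case: (boolP (2 %| i)%Z) => hi.
    rewrite hd Fev // Fo; last by rewrite par hi.
    rewrite opprD addrA subrr add0r normrN ger0_norm; last first.
      apply: mulr_ge0; first by rewrite invr_ge0 ltW.
      by case: (minC2 (z (i + 1) - a) (b - z (i + 1))) => [[-> ?]|[-> ?]]; lra.
    apply: (part1_arith K0 hm).
    case: (minC2 (z (i + 1) - a) (b - z (i + 1))) => [[-> ?]|[-> ?]];
    case: (minC2 (z i - a) (b - z (i + 1))) => [[-> ?]|[-> ?]]; lra.
  rewrite hd Fo // Fev; last by rewrite par.
  rewrite addrAC subrr add0r ger0_norm; last first.
    apply: mulr_ge0; first by rewrite invr_ge0 ltW.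
    by case: (minC2 (z i - a) (b - z i)) => [[-> ?]|[-> ?]]; lra.
  apply: (part1_arith K0 hm).
  case: (minC2 (z i - a) (b - z i)) => [[-> ?]|[-> ?]];
  case: (minC2 (z i - a) (b - z (i + 1))) => [[-> ?]|[-> ?]]; lra.
move=> J a_ b_ U G hab hdisj hU hUab htrim Ga Gb HG x /andP[ax xb].
have Ui : forall i y, a_ i < y -> y < b_ i -> U y.
  by move=> i y h1 h2; rewrite hU; exists i => //=; rewrite in_itv /= h1 h2.
have [e [e0 [He Hcase]]] : exists e : R, 0 <= e /\
    (\esum_(i in [set: J]) (Phi n (a_ i) (b_ i) x)%:E = e%:E)%E /\
    (e = 0 \/ exists i, a_ i < x < b_ i /\ e = Phi n (a_ i) (b_ i) x).
  case: (pselect (exists i, a_ i < x < b_ i)) => [[i0 hi0]|hno].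
    exists (Phi n (a_ i0) (b_ i0) x); split; first exact: Phi_ge0.
    split; last by right; exists i0.
    rewrite -(@esum_set1 _ _ i0 (fun i => (Phi n (a_ i) (b_ i) x)%:E)); last first.
      by rewrite lee_fin Phi_ge0.
    rewrite [RHS]esum_mkcond; apply: eq_esum => i _.
    case: ifP => [/set_mem -> //|/negbT hi].
    rewrite Phi_out // => hx.
    have hne : i <> i0 by move=> hii; move: hi; rewrite hii; apply/negP/negPn; apply/mem_set.
    have : (`]a_ i, b_ i[%classic `&` `]a_ i0, b_ i0[%classic) x.
      by split => /=; rewrite in_itv /=.
    by rewrite hdisj.
  exists 0; split => //; split; last by left.
  by apply: esum1 => i _; rewrite Phi_out // => h; apply: hno; exists i.
rewrite He -EFinD lee_fin.
have eout : ~ (a < x < b) -> e = 0.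
  move=> hx; case: Hcase => // [[i [/andP[h1 h2] _]]].
  by exfalso; apply: hx; have := hUab x (Ui i x h1 h2); rewrite /= in_itv.
have P0 := @Phi_ge0 R n a b x.
have [xa|ax'] : x = a \/ a < x.
  by case: (leP x a) => h4; [left; apply/eqP; rewrite eq_le h4 ax| right].
  rewrite xa eout; first by rewrite addr0 lerDl mulr_ge0 // Phi_ge0.
  by rewrite xa ltxx.
have [xb'|xb'] : x = b \/ x < b.
  by case: (leP b x) => h4; [left; apply/eqP; rewrite eq_le h4 xb| right].
  rewrite xb' eout; first by rewrite Gb -Ga addr0 lerDl mulr_ge0 // Phi_ge0.
  by rewrite xb' ltxx andbF.
have [j /andP[cx xd]] := find_j zinc hb ha ax' xb'.
set c := z j in cx *; set d := z (j + 1) in xd *.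
have cd : c < d by exact: zinc.
have ac := za j; have db := zb (j + 1).
have hq := q4 j; rewrite -/c -/d in hq.
have h1 : d - c < c - a /\ d - c < b - d.
  by case: (minC2 (c - a) (b - d)) => [[hm ?]|[hm ?]]; rewrite hm in hq; lra.
have [e' [e'0 [e'1 [e'2 He']]]] : exists e', 0 <= e' /\ e' <= x - c /\
    e' <= d - x /\ e = K^-1 * e'.
  case: Hcase => [->|[i [/andP[hi1 hi2] ->]]].
    by exists 0; rewrite mulr0; split => //; lra.
  have [_ [_ [nUc nUd]]] := htrim j; rewrite -/c -/d in nUc nUd.
  have ca : c <= a_ i.
    rewrite leNgt; apply/negP => hlt; apply: nUc; apply: (Ui i) => //; lra.
  have bd : b_ i <= d.
    rewrite leNgt; apply/negP => hlt; apply: nUd; apply: (Ui i) => //; lra.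
  exists (Num.min (x - a_ i) (b_ i - x)); rewrite -Phi_in; try lra.
  by case: (minC2 (x - a_ i) (b_ i - x)) => [[-> ?]|[-> ?]]; split; lra.
have hx : c <= x <= d by rewrite cx xd.
have [r0 [r1 rpos]] := ratio_bounds cd (htrim j) hx.
rewrite (HG j x hx).
rewrite /gfun -/c -/d.
set num := fine _; set den := fine _.
set r := num / den.
have r0' : 0 <= r by rewrite divr_ge0 // ltW.
have r1' : r <= 1 by rewrite ler_pdivrMr // mul1r.
have [ov [ho [q [Hq [q0 HG']]]]] : exists ov, (ov = c \/ ov = d) /\
    exists q, q = K^-1 * Num.min (ov - a) (b - ov) /\ 0 <= q /\
    F c + r * (F d - F c) <= F a + q.
  case: (boolP (2 %| j)%Z) => hj.
    have Fc : F c = F a by exact: Fev.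
    have Fd : F d = F a + K^-1 * Num.min (d - a) (b - d).
      by apply: Fo; rewrite par hj.
    exists d; split; first by right.
    exists (K^-1 * Num.min (d - a) (b - d)); split => //.
    have q0 : 0 <= K^-1 * Num.min (d - a) (b - d).
      apply: mulr_ge0; first by rewrite invr_ge0 ltW.
      by case: (minC2 (d - a) (b - d)) => [[-> ?]|[-> ?]]; lra.
    split => //.
    rewrite Fc Fd addrAC subrr add0r.
    have := ler_piMl q0 r1'; lra.
  have Fc : F c = F a + K^-1 * Num.min (c - a) (b - c) by exact: Fo.
  have Fd : F d = F a by apply: Fev; rewrite par.
  exists c; split; first by left.
  exists (K^-1 * Num.min (c - a) (b - c)); split => //.
  have q0 : 0 <= K^-1 * Num.min (c - a) (b - c).
    apply: mulr_ge0; first by rewrite invr_ge0 ltW.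
    by case: (minC2 (c - a) (b - c)) => [[-> ?]|[-> ?]]; lra.
  split => //.
  rewrite Fc Fd opprD addrA subrr add0r mulrN.
  have := mulr_ge0 r0' q0; lra.
have ar := arith h1.1 h1.2 cx xd ho e'0 e'1 e'2.
have hK : K^-1 * (Num.min (ov - a) (b - ov) + e') <=
    K^-1 * (2 * Num.min (x - a) (b - x)).
  by rewrite ler_pM2l // invr_gt0.
rewrite mulrDr -Hq -He' mulrCA in hK.
rewrite Ga (Phi_in _ (ltW ax') (ltW xb')).
lra.
Qed.
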